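(* Let $n_0$ be a nonnegative bounded measurable function on $(0,\infty)$ with $\lim_{x\to\infty}x^2n_0(x)=0$, and let $n$ be the global solution of the Kompaneets problem with initial data $n_0$. If $n_0$ is not identically $0$, then $n_t(x)>0$ for every $x>0$, $t>0$.
   Context: The Kompaneets problem: for $x>0$, $t>0$, $\partial_t n = \partial_x J$ with $J(x,n) = x^2\partial_x n + (x^2-2x)n + n^2$, together with $\lim_{x\to\infty} J(x,n_t)=0$; no boundary condition at $x=0$. $n_t(x)=n(x,t)$; the global solution is the unique nonnegative solution in $C([0,\infty);L^1)\cap L^\infty_{loc}([0,\infty);L^\infty)\cap C^{2,1}((0,\infty)^2)$. *)

(* Defs.v *)
From HB Require Import structures.
From mathcomp Require Import all_boot all_order all_algebra.
From mathcomp Require Import all_classical all_reals all_analysis.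
Set Implicit Arguments. Unset Strict Implicit. Unset Printing Implicit Defensive.
Import Order.TTheory GRing.Theory Num.Theory.
Import numFieldNormedType.Exports.
Local Open Scope classical_set_scope.
Local Open Scope ring_scope.

Section Kompaneets.
Variable R : realType.

Definition halfline : set R := `]0, +oo[%classic.

Notation leb := (@lebesgue_measure R).

(* functions are written u t x  (u t = n_t) *)
Definition dx (u : R -> R -> R) : R -> R -> R := fun t x => derive1 (u t) x.
Definition dt (u : R -> R -> R) : R -> R -> R := fun t x => derive1 (fun s => u s x) t.

Definition flux (u : R -> R -> R) : R -> R -> R :=
  fun t x => x ^+ 2 * dx u t x + (x ^+ 2 - 2 * x) * u t x + (u t x) ^+ 2.

Definition uncurry2 (f : R -> R -> R) : R * R -> R := fun p => f p.1 p.2.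

Definition C21 (u : R -> R -> R) : Prop :=
  forall t x, 0 < t -> 0 < x ->
    [/\ derivable (u t) x 1,
        derivable (dx u t) x 1,
        derivable (fun s => u s x) t 1,
        {for (t, x), continuous (uncurry2 u)} &
        {for (t, x), continuous (uncurry2 (dx u))} /\
        {for (t, x), continuous (uncurry2 (dx (dx u)))} /\
        {for (t, x), continuous (uncurry2 (dt u))}].

Definition CL1 (u : R -> R -> R) (u0 : R -> R) : Prop :=
  (forall t, 0 <= t -> leb.-integrable halfline (fun x => (u t x)%:E)) /\
  {ae leb, forall x, halfline x -> u 0 x = u0 x} /\
  (forall t0, 0 <= t0 ->
     (fun t => (\int[leb]_(x in halfline) (`|u t x - u t0 x|)%:E)%E)
       @ within [set t | 0 <= t] (nbhs t0) --> 0%E).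

Definition LinfLoc (u : R -> R -> R) : Prop :=
  forall T, 0 < T -> exists M : R,
    forall t, 0 <= t <= T -> {ae leb, forall x, halfline x -> `|u t x| <= M}.

(* u is a nonnegative solution of the Kompaneets problem with initial datum u0
   in the class C([0,oo);L^1) /\ L^oo_loc([0,oo);L^oo) /\ C^{2,1}((0,oo)^2);
   such a solution is unique, i.e. it is "the global solution". *)
Definition kompaneets_solution (u : R -> R -> R) (u0 : R -> R) : Prop :=
  [/\ (forall t x, 0 < t -> 0 < x -> 0 <= u t x),
      CL1 u u0 /\
      LinfLoc u,
      C21 u,
      (forall t x, 0 < t -> 0 < x -> dt u t x = dx (flux u) t x) &
      (forall t, 0 < t -> flux u t x @[x --> +oo] --> 0)].

End Kompaneets.

(* Main.v *)
Require Import Defs.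
From HB Require Import structures.
From mathcomp Require Import all_boot all_order all_algebra.
From mathcomp Require Import all_classical all_reals all_analysis.
From mathcomp Require Import lra ring.
Import Order.TTheory GRing.Theory Num.Theory.
Import numFieldNormedType.Exports.
Local Open Scope classical_set_scope.
Local Open Scope ring_scope.

Section Helpers.
Variable R : realType.


Lemma left_min_deriv (f : R -> R) (a x0 L : R) : a < x0 ->
  is_derive x0 1 f L -> (forall t, a < t < x0 -> f x0 <= f t) -> L <= 0.
Proof.
move=> ax0 df fmin.
have dfx : derivable f x0 1 by case: df.
have <- : 'D_1 f x0 = L by apply: derive_val.
rewrite ['D_1 f x0]cvg_at_leftE //.
apply: limr_le.
  rewrite -(cvg_at_leftE (fun h => h^-1 *: ((f \o shift x0) _ - f x0))) //.
  apply: cvg_trans dfx; apply: cvg_app.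
  move=> A [e egt0 Ae]; exists e => // x xe xgt0; apply: Ae => //.
  exact/ltr0_neq0.
near=> h; apply: mulr_le0_ge0.
  by rewrite invr_le0; apply: ltW; near: h; exists 1 => /=.
rewrite subr_ge0 [_%:A]mulr1; apply: fmin; near: h.
exists (x0 - a); first by rewrite /= subr_gt0.
move=> h; rewrite /= distrC subr0.
move=> /ltr_normlP [h1 h2] hneg; apply/andP; split; lra.

Unshelve. all: by end_near. Qed.


Lemma min_first (f f' : R -> R) (a b x0 : R) : a < x0 -> x0 < b ->
  (forall t, a < t < b -> is_derive t 1 f (f' t)) ->
  (forall t, a < t < b -> f x0 <= f t) -> f' x0 = 0.
Proof.
move=> ax bx df fmin.
have dm : is_derive x0 1 f 0.
  apply: (@derive1_at_min _ f a b x0).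
  - by apply: ltW; apply: lt_trans bx.
  - by move=> t; rewrite in_itv /= => /df [].
  - by rewrite in_itv /= ax bx.
  - by move=> t; rewrite in_itv /= => /fmin.
have /df dfx0 : a < x0 < b by rewrite ax bx.
by rewrite -(@derive_val _ _ _ _ _ _ _ dfx0) (@derive_val _ _ _ _ _ _ _ dm).
Qed.

Lemma min_second (f f' : R -> R) (a b x0 L : R) : a < x0 -> x0 < b ->
  (forall t, a < t < b -> is_derive t 1 f (f' t)) -> is_derive x0 1 f' L ->
  (forall t, a < t < b -> f x0 <= f t) -> 0 <= L.
Proof.
move=> ax bx df ddf fmin.
have f'0 : f' x0 = 0.
  have dm : is_derive x0 1 f 0.
    apply: (@derive1_at_min _ f a b x0).
    - by apply: ltW; apply: lt_trans bx.
    - by move=> t; rewrite in_itv /= => /df [].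
    - by rewrite in_itv /= ax bx.
    - by move=> t; rewrite in_itv /= => /fmin.
  have /df dfx0 : a < x0 < b by rewrite ax bx.
  by rewrite -(@derive_val _ _ _ _ _ _ _ dfx0) (@derive_val _ _ _ _ _ _ _ dm).
rewrite leNgt; apply/negP => L0.
have dfx : derivable f' x0 1 by case: ddf.
have cv : (fun h => h^-1 *: (f' (h *: 1 + x0) - f' x0)) @ 0^'+ --> L.
  have <- : 'D_1 f' x0 = L by apply: derive_val.
  apply: cvg_trans dfx; apply: cvg_app.
  move=> A [e egt0 Ae]; exists e => // x xe xgt0; apply: Ae => //.
  exact/lt0r_neq0.
have := @cvgr_lt _ _ _ _ _ _ cv 0 L0.
case=> e /= e0 He.
pose h0 := Num.min (e / 2) ((b - x0) / 2).
have h0pos : 0 < h0 by rewrite lt_min; apply/andP; split; lra.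
have h0e : h0 < e by rewrite /h0 gt_min; apply/orP; left; lra.
have h0b : x0 + h0 < b.
  have : h0 <= (b - x0) / 2 by rewrite /h0 ge_min lexx orbT.
  lra.
have [c cI eqc] : exists2 c, c \in `]x0, x0 + h0[%R & f (x0 + h0) - f x0 = f' c * (x0 + h0 - x0).
  apply: MVT; first lra.
    move=> y; rewrite in_itv /= => /andP [y1 y2]; apply: df; apply/andP; split; lra.
  apply: derivable_within_continuous => y; rewrite in_itv /= => /andP [y1 y2].
  have : a < y < b by apply/andP; split; lra.
  by move=> /df [].
move: cI; rewrite in_itv /= => /andP [c1 c2].
have := He (c - x0).
rewrite /ball /= sub0r normrN.
have -> : `|c - x0| = c - x0 by apply: ger0_norm; lra.
move=> /(_ ltac:(lra) ltac:(lra)).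

rewrite [_%:A]mulr1 subrK f'0 subr0 -[_ *: _]/(_ * _) pmulr_rlt0; last by rewrite invr_gt0; lra.
move=> fc.
have : f x0 <= f (x0 + h0) by apply: fmin; apply/andP; split; lra.
have : f' c * (x0 + h0 - x0) < 0 by rewrite pmulr_llt0 //; lra.
lra.
Qed.



Lemma fst_cont (p : R * R) : {for p, continuous (fun q : R * R => q.1)}.
Proof. exact: cvg_fst. Qed.
Lemma snd_cont (p : R * R) : {for p, continuous (fun q : R * R => q.2)}.
Proof. exact: cvg_snd. Qed.

Lemma wcont (D K s e2 y c : R) (p : R * R) :
  {for p, continuous (fun q : R * R =>
     D * expR (- K * (q.1 - s)) * (e2 - (q.2 - (y + c * (q.1 - s))) ^+ 2) ^+ 3)}.
Proof.
have cc : forall a : R, {for p, continuous (fun _ : R * R => a)}.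
  by move=> a; exact: cvg_cst.
have h1 : {for p, continuous (fun q : R * R => q.1 - s)}.
  exact: (continuousB (fst_cont p) (cc s)).
apply: continuousM.
  apply: continuousM; first exact: cc.
  apply: (continuous_comp (f := fun q : R * R => - K * (q.1 - s))).
    exact: continuousM.
  exact: continuous_expR.
apply: (continuous_comp (f := fun q : R * R => e2 - (q.2 - (y + c * (q.1 - s))) ^+ 2) (g := fun z => z ^+ 3)).
  apply: continuousB; first exact: cc.
  apply: (continuous_comp (f := fun q : R * R => q.2 - (y + c * (q.1 - s))) (g := fun z => z ^+ 2)).
    apply: continuousB; first exact: snd_cont.
    apply: continuousD; first exact: cc.
    by apply: continuousM.
  exact: exprn_continuous.
exact: exprn_continuous.
Qed.


Lemma is_derive_comp1 (f g : R -> R) (x df dg : R) : is_derive x 1 f df ->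
  is_derive (f x) 1 g dg -> is_derive x 1 (g \o f) (dg * df).
Proof.
move=> hf hg.
have f1 : derivable f x 1 by case: hf.
have g1 : derivable g (f x) 1 by case: hg.
apply: DeriveDef.
  apply/derivable1_diffP; apply: differentiable_comp; exact/derivable1_diffP.
rewrite -derive1E derive1_comp // !derive1E.
by rewrite (@derive_val _ _ _ _ _ _ _ hf) (@derive_val _ _ _ _ _ _ _ hg).
Qed.

Lemma w_dx (G e2 k : R) (z : R) :
  is_derive z 1 (fun x : R => G * (e2 - (x - k) ^+ 2) ^+ 3)
    (G * (- 6 * (z - k) * (e2 - (z - k) ^+ 2) ^+ 2)).
Proof.
have -> : (fun x : R => G * (e2 - (x - k) ^+ 2) ^+ 3) =
   cst G * (cst e2 - (id - cst k) ^+ 2) ^+ 3 by apply/funext => x.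
apply: is_derive_eq.
rewrite /= !fctE /= -![_ *: _]/(_ * _).
ring.
Qed.

Lemma w_dxx (G e2 k : R) (z : R) :
  is_derive z 1 (fun x : R => G * (- 6 * (x - k) * (e2 - (x - k) ^+ 2) ^+ 2))
    (G * (- 6 * (e2 - (z - k) ^+ 2) ^+ 2 + 24 * (z - k) ^+ 2 * (e2 - (z - k) ^+ 2))).
Proof.
have -> : (fun x : R => G * (- 6 * (x - k) * (e2 - (x - k) ^+ 2) ^+ 2)) =
   cst G * (cst (-6) * (id - cst k) * (cst e2 - (id - cst k) ^+ 2) ^+ 2) by apply/funext => x.
apply: is_derive_eq.
rewrite /= !fctE /= -![_ *: _]/(_ * _).
ring.
Qed.

Lemma w_dt (D K s e2 x y c : R) (t : R) :
  is_derive t 1 (fun t : R => D * expR (- K * (t - s)) * (e2 - (x - (y + c * (t - s))) ^+ 2) ^+ 3)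
    (D * expR (- K * (t - s)) * (- K * (e2 - (x - (y + c * (t - s))) ^+ 2) ^+ 3
       + 6 * c * (x - (y + c * (t - s))) * (e2 - (x - (y + c * (t - s))) ^+ 2) ^+ 2)).
Proof.
have hL : is_derive t 1 (cst (- K) * (id - cst s)) (- K).
  apply: is_derive_eq; rewrite /= !fctE /= -![_ *: _]/(_ * _); ring.
have hE : is_derive t 1 (expR \o (cst (- K) * (id - cst s))) (expR (- K * (t - s)) * (- K)).
  have := is_derive_comp1 _ _ _ _ _ hL (is_derive_expR _).
  by rewrite /= !fctE /=.
have -> : (fun t : R => D * expR (- K * (t - s)) * (e2 - (x - (y + c * (t - s))) ^+ 2) ^+ 3) =
   cst D * (expR \o (cst (- K) * (id - cst s))) * (cst e2 - (cst x - (cst y + cst c * (id - cst s))) ^+ 2) ^+ 3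
   by apply/funext => z.
apply: is_derive_eq.
rewrite /= !fctE /= -![_ *: _]/(_ * _).
ring.
Qed.
Lemma flux_deriv (n : R -> R -> R) t x : derivable (n t) x 1 ->
  derivable (dx n t) x 1 ->
  dx (flux n) t x = x ^+ 2 * derive1 (dx n t) x
     + (x ^+ 2 + 2 * n t x) * dx n t x + (2 * x - 2) * n t x.
Proof.
move=> h1 h2.
have d1 := derivableP h1.
have d2 := derivableP h2.
change (derive1 (flux n t) x = x ^+ 2 * derive1 (dx n t) x
     + (x ^+ 2 + 2 * n t x) * dx n t x + (2 * x - 2) * n t x).
have -> : flux n t = (id ^+ 2 * dx n t + (id ^+ 2 - cst 2 * id) * n t + (n t) ^+ 2).
  by apply/funext => y.
rewrite derive1E.
rewrite (@derive_val _ _ _ _ _ _ _ (is_deriveD _ _)) /=.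
rewrite !fctE /= -!derive1E -![_ *: _]/(_ * _).
rewrite /dx; ring.
Qed.
Lemma sq_bound (a b : R) : 0 < b -> a ^+ 2 < b ^+ 2 -> -b <= a <= b.
Proof. move=> b0 h; apply/andP; split; nra. Qed.

Lemma alg_contra (ξ N P Rr T G u ζ c K ε δ x1 x2 : R) :
  0 < x1 -> x1 < ξ -> ξ < x2 -> 0 <= N -> N < G * u ^+ 3 -> N < δ -> 0 < G ->
  0 < u -> -ε <= ζ <= ε -> 0 < ε -> u = ε ^+ 2 - ζ ^+ 2 ->
  P = G * (- 6 * ζ * u ^+ 2) ->
  G * (- 6 * u ^+ 2 + 24 * ζ ^+ 2 * u) <= Rr ->
  T - G * (- K * u ^+ 3 + 6 * c * ζ * u ^+ 2) <= 0 ->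
  T = ξ ^+ 2 * Rr + (ξ ^+ 2 + 2 * N) * P + (2 * ξ - 2) * N ->
  K = 2 + (30 * x2 ^+ 2 + 6 * (x2 ^+ 2 + 2 * δ + `|c|) * ε) ^+ 2 /
          (4 * (24 * x1 ^+ 2 * ε ^+ 2)) -> False.
Proof.
move=> x10 x1ξ ξx2 N0 NG Nδ G0 u0 /andP [ζ1 ζ2] ε0 ue Peq Rr_ge Tle Teq Keq.
have ξ0 : 0 < ξ by lra.
have r' : ξ ^+ 2 * (G * (- 6 * u ^+ 2 + 24 * ζ ^+ 2 * u)) <= ξ ^+ 2 * Rr.
  by apply: ler_wpM2l => //; exact: sqr_ge0.
have ξN : 0 <= ξ * N by apply: mulr_ge0 => //; lra.
pose Φ := (K - 2) * u ^+ 2 - 6 * ξ ^+ 2 * u + 24 * ξ ^+ 2 * ζ ^+ 2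
          - 6 * (ξ ^+ 2 + 2 * N + c) * ζ * u.
have S0 : G * u * Φ < 0.
  have -> : G * u * Φ = - (G * (- K * u ^+ 3 + 6 * c * ζ * u ^+ 2)
      - ξ ^+ 2 * (G * (- 6 * u ^+ 2 + 24 * ζ ^+ 2 * u))
      - (ξ ^+ 2 + 2 * N) * (G * (- 6 * ζ * u ^+ 2)) + 2 * (G * u ^+ 3)).
    rewrite /Φ; ring.
  rewrite Peq in Teq.
  rewrite oppr_lt0.
  lra.
have Φneg : Φ < 0.
  by move: S0; rewrite pmulr_rlt0 // mulr_gt0.
pose B := x2 ^+ 2 + 2 * δ + `|c|.
pose CC := 30 * x2 ^+ 2 + 6 * B * ε.
pose q := 24 * x1 ^+ 2 * ε ^+ 2.
have q0 : 0 < q by rewrite /q !mulr_gt0 // exprn_gt0.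
have hK : 4 * q * ((K - 2) * u ^+ 2 - CC * u + q) = (CC * u - 2 * q) ^+ 2.
  rewrite Keq /CC /B /q; field; rewrite /q in q0; lra.
have fin : 0 <= (K - 2) * u ^+ 2 - CC * u + q.
  have : 0 <= 4 * q * ((K - 2) * u ^+ 2 - CC * u + q) by rewrite hK sqr_ge0.
  by rewrite pmulr_rge0 //; lra.
have ξ2 : ξ ^+ 2 <= x2 ^+ 2 by rewrite lerXn2r ?nnegrE //; lra.
have ξ1 : x1 ^+ 2 <= ξ ^+ 2 by rewrite lerXn2r ?nnegrE //; lra.
have cb : c <= `|c| by exact: ler_norm.
have cb' : - c <= `|c| by rewrite -normrN; exact: ler_norm.
have βB : - B <= ξ ^+ 2 + 2 * N + c <= B.
  apply/andP; split; rewrite /B; have := sqr_ge0 ξ; lra.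
have βζ : (ξ ^+ 2 + 2 * N + c) * ζ <= B * ε.
  move: βB => /andP [b1 b2]; nra.
have h1 : (ξ ^+ 2 + 2 * N + c) * ζ * u <= B * ε * u by apply: ler_wpM2r => //; lra.
have h2 : ξ ^+ 2 * u <= x2 ^+ 2 * u by apply: ler_wpM2r => //; lra.
have h3 : x1 ^+ 2 * ε ^+ 2 <= ξ ^+ 2 * ε ^+ 2.
  by apply: ler_wpM2r => //; exact: sqr_ge0.
have hz : ζ ^+ 2 = ε ^+ 2 - u by rewrite ue; ring.
have : Φ = (K - 2) * u ^+ 2 - 30 * ξ ^+ 2 * u + 24 * ξ ^+ 2 * ε ^+ 2
          - 6 * ((ξ ^+ 2 + 2 * N + c) * ζ * u).
  by rewrite /Φ hz; ring.
move: fin; rewrite /CC /q => fin.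
lra.
Qed.
End Helpers.

Section Barrier.
Variable R : realType.
Variable n : R -> R -> R.
Hypothesis nge : forall t x, 0 < t -> 0 < x -> 0 <= n t x.
Hypothesis C : C21 n.
Hypothesis pde : forall t x, 0 < t -> 0 < x -> dt n t x = dx (flux n) t x.

Lemma barrier (s t y x : R) : 0 < s -> s < t -> 0 < y -> 0 < x -> 0 < n s y -> 0 < n t x.
Proof.
move=> s0 st y0 x0 nsy.
pose δ := n s y / 2.
have δ0 : 0 < δ by rewrite /δ; lra.
have [ε0 ε00 Hε0] : exists2 ε0 : R, 0 < ε0 & forall ξ, `|y - ξ| < ε0 -> δ < n s ξ.
  have [d1 _ _ _ _] := C s y s0 y0.
  have cs : {for y, continuous (n s)}.
    by apply: differentiable_continuous; apply/derivable1_diffP.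
  have := @cvgr_dist_lt _ _ _ _ _ (n s) (n s y) cs _ δ0.
  case=> e /= e0 He; exists e => // ξ hξ.
  have := He ξ hξ.
  rewrite /δ => /ltr_normlP [h1 h2]; lra.
pose m := Num.min x y. pose M := Num.max x y.
have m0 : 0 < m by rewrite lt_min x0 y0.
have mx : m <= x by rewrite ge_min lexx.
have my : m <= y by rewrite ge_min lexx orbT.
have xM : x <= M by rewrite le_max lexx.
have yM : y <= M by rewrite le_max lexx orbT.
pose ε := Num.min (ε0 / 2) (m / 2).
have εpos : 0 < ε by rewrite lt_min; apply/andP; split; lra.
have εε0 : ε < ε0.
  have : ε <= ε0 / 2 by rewrite ge_min lexx.
  lra.
have εm : ε <= m / 2 by rewrite ge_min lexx orbT.
pose x1 := m / 4. pose x2 := M + ε.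
have x1pos : 0 < x1 by rewrite /x1; lra.
have x12 : x1 < x2 by rewrite /x1 /x2; lra.
pose c := (x - y) / (t - s).
pose e2 := ε ^+ 2.
have e2pos : 0 < e2 by rewrite /e2 exprn_gt0.
pose D := δ / e2 ^+ 3.
have De : D * e2 ^+ 3 = δ by rewrite /D divfK // expf_neq0 // gt_eqF.
have Dpos : 0 < D by rewrite /D divr_gt0 // exprn_gt0.
pose B := x2 ^+ 2 + 2 * δ + `|c|.
pose CC := 30 * x2 ^+ 2 + 6 * B * ε.
pose q := 24 * x1 ^+ 2 * e2.
have qpos : 0 < q by rewrite /q !mulr_gt0 // exprn_gt0.
pose K := 2 + CC ^+ 2 / (4 * q).
pose w := fun τ ξ : R => D * expR (- K * (τ - s)) * (e2 - (ξ - (y + c * (τ - s))) ^+ 2) ^+ 3.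
pose z := fun p : R * R => n p.1 p.2 - w p.1 p.2.
have center : forall τ, s <= τ <= t -> m <= y + c * (τ - s) <= M.
  move=> τ /andP [h1 h2].
  pose θ := (τ - s) / (t - s).
  have hθ : c * (τ - s) = (x - y) * θ.
    rewrite /c /θ; field; rewrite subr_eq0; apply/negP => /eqP ts; lra.
  have θ0 : 0 <= θ by rewrite /θ divr_ge0 //; lra.
  have θ1 : θ <= 1 by rewrite /θ ler_pdivrMr; lra.
  rewrite hθ; apply/andP; split; nra.
have wle0 : forall τ ξ, s <= τ -> e2 <= (ξ - (y + c * (τ - s))) ^+ 2 -> w τ ξ <= 0.
  move=> τ ξ _ h.
  rewrite /w; apply: mulr_ge0_le0.
    by apply: mulr_ge0; [exact: ltW | exact: ltW (expR_gt0 _)].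
  set u := e2 - _.
  have : u <= 0 by rewrite /u; lra.
  move=> u0; rewrite exprS; apply: mulr_le0_ge0 => //.
  by rewrite sqr_ge0.
have bottom : forall ξ, x1 <= ξ <= x2 -> 0 <= z (s, ξ).
  move=> ξ /andP [h1 h2].
  rewrite /z /=.
  have ξpos : 0 < ξ by lra.
  have [hlt|hge] := ltP ((ξ - (y + c * (s - s))) ^+ 2) e2; last first.
    have := wle0 s ξ (lexx s) hge.
    have := nge s ξ s0 ξpos.
    lra.
  have nd : δ < n s ξ.
    apply: Hε0.
    move: hlt; rewrite subrr mulr0 addr0 => hlt.
    apply: (lt_trans _ εε0).
    apply/ltr_normlP; rewrite /e2 in hlt; split; nra.
  have : w s ξ <= δ.
    rewrite /w subrr mulr0 expR0 mulr1 -De.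
    rewrite ler_pM2l //.
    set u := e2 - _.
    have u0 : 0 <= u by rewrite /u; lra.
    have ue : u <= e2 by rewrite /u; have := sqr_ge0 (ξ - (y + c * 0)); lra.
    by apply: lerXn2r => //; rewrite nnegrE //; apply: ltW.
  lra.
have lateral : forall τ ξ, s <= τ <= t -> x1 <= ξ <= x2 ->
    e2 <= (ξ - (y + c * (τ - s))) ^+ 2 -> 0 <= z (τ, ξ).
  move=> τ ξ /andP [h1 h2] /andP [h3 h4] h.
  rewrite /z /=.
  have := wle0 τ ξ h1 h.
  have := nge τ ξ ltac:(lra) ltac:(lra).
  lra.
have left_ : forall τ, s <= τ <= t -> 0 <= z (τ, x1).
  move=> τ hτ; apply: lateral => //.
    rewrite /x1; apply/andP; split; first by [].
    have : x1 <= x2 by rewrite /x1 /x2; lra.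
    by rewrite /x1.
  have := center τ hτ.
  move=> /andP [c1 c2].
  have hh : ε <= (y + c * (τ - s)) - x1 by rewrite /x1; lra.
  rewrite /e2; nra.
have right_ : forall τ, s <= τ <= t -> 0 <= z (τ, x2).
  move=> τ hτ; apply: lateral => //.
    apply/andP; split => //.
    by rewrite /x1 /x2; lra.
  have := center τ hτ.
  move=> /andP [c1 c2].
  have hh : ε <= x2 - (y + c * (τ - s)) by rewrite /x2; lra.
  rewrite /e2; nra.
pose A := `[s, t]%classic `*` `[x1, x2]%classic.
have cA : compact A by apply: compact_setX; exact: segment_compact.
have A0 : A !=set0.
  exists (s, x1); split => /=; rewrite in_itv /=; apply/andP; split; lra.
have cz : {within A, continuous z}.
  apply: continuous_in_subspaceT => p; rewrite inE => -[/=].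
  rewrite !in_itv /= => /andP [p1 p2] /andP [p3 p4].
  have hn : {for p, continuous (fun q : R * R => n q.1 q.2)}.
    have [_ _ _ hc _] := C p.1 p.2 ltac:(lra) ltac:(lra).
    by case: p hc {p1 p2 p3 p4}.
  have hw : {for p, continuous (fun q : R * R => w q.1 q.2)} by exact: wcont.
  exact: (continuousB hn hw).
have [[τ0 ξ0] PA Pmin] := compact_EVT_min A0 cA cz.
have inA : forall τ ξ, s <= τ <= t -> x1 <= ξ <= x2 -> (τ, ξ) \in A.
  by move=> τ ξ h1 h2; rewrite inE; split => /=; rewrite in_itv.
move: PA; rewrite inE => -[/=]; rewrite !in_itv /= => /andP [τs τt] /andP [ξ1 ξ2].
have ct : c * (t - s) = x - y.
  rewrite /c divfK // subr_eq0; apply/negP => /eqP ts; lra.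
suff zP : 0 <= z (τ0, ξ0).
  have : z (τ0, ξ0) <= z (t, x).
    apply: Pmin; apply: inA; apply/andP; split; rewrite /x1 /x2; lra.
  move: zP; rewrite /z /= /w ct.
  have -> : x - (y + (x - y)) = 0 by ring.
  have : 0 < D * expR (- K * (t - s)) * (e2 - 0 ^+ 2) ^+ 3.
    rewrite expr0n /= subr0; apply: mulr_gt0; last exact: exprn_gt0.
    by apply: mulr_gt0 => //; exact: expR_gt0.
  lra.
rewrite leNgt; apply/negP => zneg.
have hξ : x1 <= ξ0 <= x2 by rewrite ξ1 ξ2.
have hτ : s <= τ0 <= t by rewrite τs τt.
have τ0s : s < τ0.
  rewrite lt_neqAle τs andbT; apply/eqP => eq.
  move: zneg; rewrite -eq; have := bottom ξ0 hξ; lra.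
have ξ1s : x1 < ξ0.
  rewrite lt_neqAle ξ1 andbT; apply/eqP => eq.
  move: zneg; rewrite -eq; have := left_ τ0 hτ; lra.
have ξ2s : ξ0 < x2.
  rewrite lt_neqAle ξ2 andbT; apply/eqP => eq.
  move: zneg; rewrite eq; have := right_ τ0 hτ; lra.
have τpos : 0 < τ0 by lra.
have ξpos : 0 < ξ0 by lra.
pose k := y + c * (τ0 - s).
pose E0 := expR (- K * (τ0 - s)).
pose G := D * E0.
pose ζ0 := ξ0 - k.
pose u := e2 - ζ0 ^+ 2.
pose N := n τ0 ξ0.
have Npos : 0 <= N := nge τ0 ξ0 τpos ξpos.
have NW : N < G * u ^+ 3.
  by move: zneg; rewrite /z /w /N /G /u /ζ0 /k /E0 /=; lra.
have E0pos : 0 < E0 := expR_gt0 _.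
have Kpos : 0 < K.
  rewrite /K; have : 0 <= CC ^+ 2 / (4 * q).
    by rewrite divr_ge0 // ?sqr_ge0 //; lra.
  lra.
have E01 : E0 <= 1.
  rewrite /E0 expR_le1 mulNr oppr_le0; apply: mulr_ge0; apply: ltW => //.
  by rewrite subr_gt0.
have Gpos : 0 < G by rewrite /G mulr_gt0.
have upos : 0 < u.
  rewrite ltNge; apply/negP => u0.
  have : u ^+ 3 <= 0 by rewrite exprS mulr_le0_ge0 // sqr_ge0.
  move=> u3; have : G * u ^+ 3 <= 0 by rewrite pmulr_rle0.
  lra.
have ue : u <= e2 by rewrite /u; have := sqr_ge0 ζ0; lra.
have ζ0e : -ε <= ζ0 <= ε.
  apply: sq_bound => //.
  have : 0 < e2 - ζ0 ^+ 2 := upos.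
  by rewrite subr_gt0.
have Nδ : N < δ.
  have u3 : u ^+ 3 <= e2 ^+ 3.
    by apply: lerXn2r; rewrite ?nnegrE //; apply: ltW.
  have : G * u ^+ 3 <= D * u ^+ 3.
    rewrite /G -mulrA ler_pM2l // -[X in _ <= X]mul1r ler_wpM2r //.
    by apply: exprn_ge0; apply: ltW.
  have : D * u ^+ 3 <= D * e2 ^+ 3 by rewrite ler_pM2l.
  lra.
pose f := fun ξ => n τ0 ξ - w τ0 ξ.
pose wx := fun ξ => G * (- 6 * (ξ - k) * (e2 - (ξ - k) ^+ 2) ^+ 2).
pose f' := fun ξ => dx n τ0 ξ - wx ξ.
have hd : forall ξ, x1 < ξ < x2 -> is_derive ξ 1 f (f' ξ).
  move=> ξ /andP [h1 h2].
  have [d1 _ _ _ _] := C τ0 ξ τpos ltac:(lra).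
  have d1' := derivableP d1.
  have wd := @w_dx _ G e2 k ξ.
  have -> : f = n τ0 - (fun ξ => G * (e2 - (ξ - k) ^+ 2) ^+ 3) by apply/funext.
  apply: is_derive_eq.
  by rewrite /f' /wx /dx derive1E.
pose wxx := G * (- 6 * (e2 - (ξ0 - k) ^+ 2) ^+ 2 + 24 * (ξ0 - k) ^+ 2 * (e2 - (ξ0 - k) ^+ 2)).
have hdd : is_derive ξ0 1 f' (derive1 (dx n τ0) ξ0 - wxx).
  have [_ d2 _ _ _] := C τ0 ξ0 τpos ξpos.
  have d2' := derivableP d2.
  have wd := @w_dxx _ G e2 k ξ0.
  have -> : f' = dx n τ0 - wx by apply/funext.
  apply: is_derive_eq.
  by rewrite derive1E.
have fmin : forall ξ, x1 < ξ < x2 -> f ξ0 <= f ξ.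
  move=> ξ /andP [h1 h2].
  exact: (Pmin (τ0, ξ) (inA τ0 ξ hτ ltac:(apply/andP; split; apply: ltW))).
have p_eq := @min_first _ f f' x1 x2 ξ0 ξ1s ξ2s hd fmin.
have r_ge := @min_second _ f f' x1 x2 ξ0 _ ξ1s ξ2s hd hdd fmin.
pose h := fun τ => n τ ξ0 - w τ ξ0.
pose wt := G * (- K * u ^+ 3 + 6 * c * ζ0 * u ^+ 2).
have hdt : is_derive τ0 1 h (dt n τ0 ξ0 - wt).
  have [_ _ d3 _ _] := C τ0 ξ0 τpos ξpos.
  have d3' := derivableP d3.
  have wd := @w_dt _ D K s e2 ξ0 y c τ0.
  have -> : h = (fun τ => n τ ξ0) - (fun τ => D * expR (- K * (τ - s)) *
      (e2 - (ξ0 - (y + c * (τ - s))) ^+ 2) ^+ 3) by apply/funext.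
  apply: is_derive_eq.
  by rewrite /dt derive1E /wt /G /E0 /u /ζ0 /k mulrA.
have hmin : forall τ, s < τ < τ0 -> h τ0 <= h τ.
  move=> τ /andP [h1 h2].
  exact: (Pmin (τ, ξ0) (inA τ ξ0 ltac:(apply/andP; split; lra) hξ)).
have dtle := @left_min_deriv _ h s τ0 _ τ0s hdt hmin.
have [d1 d2 _ _ _] := C τ0 ξ0 τpos ξpos.
have hp := pde τ0 ξ0 τpos ξpos.
rewrite (@flux_deriv _ n τ0 ξ0 d1 d2) in hp.
apply: (@alg_contra _ ξ0 N (dx n τ0 ξ0) (derive1 (dx n τ0) ξ0) (dt n τ0 ξ0)
   G u ζ0 c K ε δ x1 x2 x1pos ξ1s ξ2s Npos NW Nδ Gpos upos ζ0e εpos).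
- by [].
- by apply/eqP; rewrite -subr_eq0; apply/eqP; exact: p_eq.
- by rewrite -subr_ge0.
- exact: dtle.
- exact: hp.
- by [].
Qed.
End Barrier.

Section Step1.
Variable R : realType.

Lemma step1 (n0 : R -> R) (n : R -> R -> R) (t : R) :
  (forall t x, 0 < t -> 0 < x -> 0 <= n t x) ->
  CL1 n n0 ->
  ~ {ae (@lebesgue_measure R), forall x, @halfline R x -> n0 x = 0} ->
  0 < t -> exists s y, [/\ 0 < s, s < t, 0 < y & 0 < n s y].
Proof.
move=> nge [int0 [ae0 cont]] nae t0.
apply: contrapT => hne.
have nz : forall s y, 0 < s -> s < t -> 0 < y -> n s y = 0.
  move=> s y s0 st y0; apply/eqP; rewrite eq_le nge // andbT leNgt.
  by apply/negP => hp; apply: hne; exists s, y.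
pose I := (\int[@lebesgue_measure R]_(x in @halfline R) (`|n 0 x|)%:E)%E.
have Fs : forall s, 0 < s -> s < t ->
    (\int[@lebesgue_measure R]_(x in @halfline R) (`|n s x - n 0 x|)%:E)%E = I.
  move=> s s0 st; apply: eq_integral => x; rewrite inE /halfline /= in_itv /= andbT => x0.
  by rewrite nz // sub0r normrN.
have := cont 0 (lexx 0).
set F := fun s => _.
move=> cF.
have cF' : F @ 0^'+ --> 0%E.
  apply: cvg_trans cF; apply: cvg_app.
  move=> A [e egt0 Ae]; exists e => // x xe xgt0; apply: Ae => //; exact: ltW.
have cI : F @ 0^'+ --> I.
  have : {near 0^'+, cst I =1 F}.
    near=> s.
    have s0 : 0 < s by near: s; exact: nbhs_right_gt.
    have st : s < t.
      near: s; exists t => //= s; rewrite /ball /= sub0r normrN => /ltr_normlP [_ ?] _; lra.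
    by rewrite /F /= Fs.
  move=> hnear; exact: (cvg_trans (near_eq_cvg hnear) (cvg_cst I)).
have I0 : I = 0%E by exact: (@cvg_unique _ (@ereal_hausdorff R) _ _ I 0%E cI cF').
apply: nae.
have /integrableP [mf _] := int0 0 (lexx 0).
have := (ae_eq_integral_abs (@lebesgue_measure R) (measurable_itv _) mf).1.
have -> : (\int[@lebesgue_measure R]_(x in @halfline R) `|(n 0 x)%:E|)%E = I.
  by apply: eq_integral => x _; rewrite abse_EFin.
move=> /(_ I0) hae.
apply: filterS2 hae ae0 => x h1 h2 hx.
have := h1 hx; have := h2 hx.
by move=> <- [].
Unshelve. all: by end_near. Qed.
End Step1.

Theorem lemma5p1 (R : realType) (n0 : R -> R) (n : R -> R -> R) :
  measurable_fun (@halfline R) n0 ->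
  (forall x, 0 < x -> 0 <= n0 x) ->
  (exists M : R, forall x, 0 < x -> `|n0 x| <= M) ->
  x ^+ 2 * n0 x @[x --> +oo] --> 0 ->
  kompaneets_solution n n0 ->
  ~ {ae (@lebesgue_measure R), forall x, @halfline R x -> n0 x = 0} ->
  forall t x, 0 < t -> 0 < x -> 0 < n t x.
Proof.
move=> _ _ _ _ [nge [CL _] C pde _] nae t x t0 x0.
have [s [y [s0 st y0 nsy]]] := @step1 _ n0 n t nge CL nae t0.
exact: (@barrier _ n nge C pde s t y x s0 st y0 x0 nsy).
Qed.
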